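(* Let $m\ge4$ and let $\pi$ be the permutation of $\mathbb{F}_{2^m}$ given by $\pi(x)=x^{2^m-2}$. Then for all $(a_1,a_2),(b_1,b_2)\in\mathbb{F}_{2^m}\times\mathbb{F}_{2^m}$, the identities \[\pi(x)+\pi(x+a_2)+\pi(x+b_2)+\pi(x+a_2+b_2)=0,\qquad {\rm Tr}_1^m\bigl(a_1\pi(x+a_2)+b_1\pi(x+b_2)+(a_1+b_1)\pi(x+a_2+b_2)\bigr)=0\] hold for all $x\in\mathbb{F}_{2^m}$ if and only if one of the following holds: $(a_1,a_2)=(0,0)$, $(b_1,b_2)=(0,0)$, $(a_1,a_2)=(b_1,b_2)$, or $a_2=b_2=0$.
   Context: ${\rm Tr}_1^m$ denotes the absolute trace from $\mathbb{F}_{2^m}$ to $\mathbb{F}_2$. *)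

(* Defs.v *)
From mathcomp Require Import all_boot all_algebra all_field.
Set Implicit Arguments. Unset Strict Implicit. Unset Printing Implicit Defensive.
Import GRing.Theory.
Local Open Scope ring_scope.

(* Absolute trace Tr_1^m : F_{2^m} -> F_2, viewed with values in F_{2^m}
   (it lands in the prime subfield): Tr(x) = sum_{i<m} x^(2^i). *)
Definition trace1 (F : finFieldType) (m : nat) (x : F) : F :=
  \sum_(i < m) x ^+ (2 ^ i)%N.

Definition pinv (F : finFieldType) (m : nat) (x : F) : F := x ^+ (2 ^ m - 2)%N.

(* Main.v *)
Require Import Defs.
From mathcomp Require Import all_boot all_algebra all_field.
From mathcomp Require Import ring zify.
Import GRing.Theory.
Local Open Scope ring_scope.

Section C2.
Variable R : comNzRingType.
Hypothesis c2 : (2%:R : R) = 0.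

Lemma c2_addrr (x : R) : x + x = 0.
Proof. by rewrite -mulr2n -mulr_natr c2 mulr0. Qed.

Lemma c2_opp (x : R) : - x = x.
Proof. by apply/eqP; rewrite eq_sym -subr_eq0 opprK c2_addrr. Qed.

Lemma c2_mulrn (x : R) n : x *+ n = x *+ (n %% 2).
Proof.
rewrite {1}(divn_eq n 2) mulrnDr mulrnA.
by rewrite -mulr_natr c2 mulr0 add0r.
Qed.

Lemma c2_sqrD (x y : R) : (x + y) ^+ 2 = x ^+ 2 + y ^+ 2.
Proof. by rewrite sqrrD -mulr_natr c2 mulr0 addr0. Qed.

Lemma c2_frobD (x y : R) i : (x + y) ^+ (2 ^ i) = x ^+ (2 ^ i) + y ^+ (2 ^ i).
Proof.
elim: i => [|i IH]; first by rewrite !expr1.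
by rewrite expnS mulnC !exprM IH c2_sqrD.
Qed.

Lemma c2_sqr_sum n (f : 'I_n -> R) : (\sum_(i < n) f i) ^+ 2 = \sum_(i < n) f i ^+ 2.
Proof.
elim: n f => [|n IH] f; first by rewrite !big_ord0 expr0n.
by rewrite !big_ord_recr /= c2_sqrD IH.
Qed.
End C2.

Section FF.
Variable F : finFieldType.
Variable m : nat.
Hypothesis hm : (3 <= m)%N.
Hypothesis hcard : #|F| = (2 ^ m)%N.

Lemma c2F : (2%:R : F) = 0.
Proof. by apply: pcharf0; apply: (card_finPcharP hcard). Qed.

Lemma c2P : (2%:R : {poly F}) = 0.
Proof. by rewrite -polyC_natr c2F. Qed.

Lemma m_ge2 : (2 <= 2 ^ m)%N.
Proof. by rewrite -{1}(expn1 2) leq_exp2l //; apply: leq_trans hm. Qed.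

Lemma m_ge8 : (8 <= 2 ^ m)%N.
Proof. by rewrite -[8%N]/(2 ^ 3)%N leq_exp2l. Qed.

Lemma expN (x : F) : x ^+ (2 ^ m) = x.
Proof. by rewrite -hcard expf_card. Qed.

Lemma expN1 (x : F) : x != 0 -> x ^+ (2 ^ m - 1) = 1.
Proof.
move=> x0; apply: (mulIf x0); rewrite mul1r -exprSr.
have -> : (2 ^ m - 1).+1 = (2 ^ m)%N by have := m_ge2; lia.
exact: expN.
Qed.

Lemma pinv_inv (x : F) : x != 0 -> pinv m x = x^-1.
Proof.
move=> x0; apply: (mulIf x0); rewrite mulVf // /pinv -exprSr.
have -> : (2 ^ m - 2).+1 = (2 ^ m - 1)%N by have := m_ge2; lia.
by rewrite expN1.
Qed.

Lemma pinv_frob (x : F) i : (i < m)%N ->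
  pinv m x ^+ (2 ^ i) = x ^+ (2 ^ m - 1 - 2 ^ i).
Proof.
move=> im; have hi : (2 ^ i < 2 ^ m)%N by rewrite ltn_exp2l.
have hi1 : (1 <= 2 ^ i)%N by rewrite expn_gt0.
have hi2 : (2 * 2 ^ i <= 2 ^ m)%N by rewrite -expnS leq_exp2l.
rewrite /pinv -exprM; have [->|x0] := eqVneq x 0.
  have := m_ge8 => h8; rewrite !expr0n /=.
  have -> : ((2 ^ m - 2) * 2 ^ i == 0)%N = false by apply/negbTE; rewrite muln_eq0; apply/norP; split; lia.
  by have -> : ((2 ^ m - 1 - 2 ^ i) == 0)%N = false by apply/negbTE; lia.
have -> : ((2 ^ m - 2) * 2 ^ i = (2 ^ m - 1 - 2 ^ i) + (2 ^ m - 1) * (2 ^ i - 1))%N.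
  by have := m_ge2; nia.
by rewrite exprD exprM expN1 // expr1n mulr1.
Qed.

Lemma trace1D (u v : F) : trace1 m (u + v) = trace1 m u + trace1 m v.
Proof. by rewrite /trace1 -big_split; apply: eq_bigr => i _; rewrite c2_frobD // c2F. Qed.

Definition G (a : F) n : {poly F} := \sum_(i < n) (a ^+ (2 ^ i)) *: 'X^(2 ^ n - 1 - 2 ^ i).

Lemma hornerG a x : (G a m).[x] = trace1 m (a * pinv m x).
Proof.
rewrite /G /trace1 horner_sum; apply: eq_bigr => i _.
by rewrite hornerZ hornerXn exprMn pinv_frob.
Qed.

Lemma size_G a n : (size (G a n) <= 2 ^ n)%N.
Proof.
rewrite /G; apply: (big_ind (fun p : {poly F} => size p <= 2 ^ n)%N).
- by rewrite size_poly0.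
- by move=> p q hp hq; rewrite (leq_trans (size_polyD _ _)) // geq_max hp hq.
move=> i _; rewrite (leq_trans (size_scale_leq _ _)) // size_polyXn.
have : (1 <= 2 ^ i)%N by rewrite expn_gt0.
have : (1 <= 2 ^ n)%N by rewrite expn_gt0.
lia.
Qed.

Lemma derivG a n : (G a n.+1)^`() = (G a n) ^+ 2.
Proof.
rewrite /G linear_sum c2_sqr_sum; last exact: c2P.
rewrite big_ord_recl /= derivZ derivXn c2_mulrn; last exact: c2P.
have -> : ((2 ^ n.+1 - 1 - 2 ^ 0) %% 2 = 0)%N.
  have : (1 <= 2 ^ n)%N by rewrite expn_gt0.
  by rewrite expnS expn0; lia.
rewrite mulr0n scaler0 add0r; apply: eq_bigr => i _.
rewrite derivZ derivXn c2_mulrn; last exact: c2P.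
have hi : (2 ^ i < 2 ^ n)%N by rewrite ltn_exp2l.
have hi1 : (1 <= 2 ^ i)%N by rewrite expn_gt0.
rewrite /bump /= add1n.
have -> : ((2 ^ n.+1 - 1 - 2 ^ i.+1) %% 2 = 1)%N by rewrite !expnS; lia.
have -> : ((2 ^ n.+1 - 1 - 2 ^ i.+1).-1 = (2 ^ n - 1 - 2 ^ i) * 2)%N by rewrite !expnS; lia.
by rewrite exprZn -!exprM expnSr.
Qed.

Lemma Gstep a b n : G a n.+1 \Po ('X + b%:P) = G a n.+1 ->
  G a n \Po ('X + b%:P) = G a n.
Proof.
move=> /(congr1 deriv); rewrite deriv_comp derivG derivD derivX derivC addr0 mulr1.
rewrite expr2 comp_polyM -expr2 => h.
have : (G a n \Po ('X + b%:P) + G a n) ^+ 2 = 0.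
  by rewrite c2_sqrD ?c2P // h c2_addrr // c2P.
move/eqP; rewrite expf_eq0 /= => /eqP h2.
by apply/eqP; rewrite -subr_eq0 c2_opp ?c2P // h2.
Qed.

Lemma keyL (c b : F) : b != 0 ->
  (forall x, trace1 m (c * (pinv m x + pinv m (x + b))) = 0) -> c = 0.
Proof.
move=> b0 h; apply/eqP; apply/negP => c0.
pose q : {poly F} := 'X + b%:P.
have per : G c m \Po q = G c m.
  apply/eqP; rewrite -subr_eq0; apply/eqP.
  apply: (@roots_geq_poly_eq0 _ _ (enum F)).
  - apply/allP => x _; rewrite rootE hornerD hornerN horner_comp !hornerE !hornerG.
    have := h x; rewrite mulrDr trace1D => /eqP; rewrite addr_eq0 c2_opp ?c2F //.
    by move=> /eqP ->; rewrite subrr.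
  - exact: enum_uniq.
  rewrite -cardE hcard (leq_trans (size_polyD _ _)) // geq_max size_opp size_G andbT.
  rewrite (leq_trans (size_comp_poly_leq _ _)) // size_XaddC muln1.
  have := size_G c m; have := m_ge2; case: (size (G c m)) => //= k; lia.
have perk : forall d, (d <= m)%N -> G c (m - d) \Po q = G c (m - d).
  elim=> [|d IH] hd; first by rewrite subn0.
  apply: Gstep; have -> : (m - d.+1).+1 = (m - d)%N by lia.
  by apply: IH; lia.
have ev : forall n, (2 <= n <= m)%N -> (G c n).[b] = 0.
  move=> n /andP [h2 hn]; have := perk (m - n)%N (leq_subr _ _).
  rewrite subKn // => /(congr1 (fun p => p.[0])).
  rewrite horner_comp !hornerE => ->.
  rewrite /G horner_sum big1 // => i _; rewrite hornerZ hornerXn expr0n.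
  have hi : (2 ^ i < 2 ^ n)%N by rewrite ltn_exp2l.
  have : (2 ^ n - 1 - 2 ^ i == 0)%N = false.
    have : (2 <= 2 ^ (n - 1))%N.
      by rewrite -{1}(expn1 2) leq_exp2l //; lia.
    have : (2 ^ i <= 2 ^ (n-1))%N by rewrite leq_exp2l //; have := ltn_ord i; lia.
    have -> : (2 ^ n = 2 * 2 ^ (n-1))%N by rewrite -expnS; congr (expn _ _); lia.
    lia.
  by move=> ->; rewrite mulr0.
have e2 : c * b ^+ 2 + c ^+ 2 * b = 0.
  have := ev 2%N; rewrite /G !big_ord_recr big_ord0 /= add0r !hornerD !hornerZ !hornerXn.
  by rewrite expr1; apply; apply: leq_trans hm.
have e3 : c * b ^+ 6 + c ^+ 2 * b ^+ 5 + c ^+ 4 * b ^+ 3 = 0.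
  have := ev 3%N; rewrite /G !big_ord_recr big_ord0 /= add0r !hornerD !hornerZ !hornerXn.
  by rewrite expr1; apply; rewrite hm.
have hcb : c = b.
  have : c * b * (b + c) = 0.
    by rewrite -e2; ring.
  move/eqP; rewrite !mulf_eq0 (negbTE b0) /= orbF (negPf (introN idP c0)) /= addr_eq0 c2_opp ?c2F //.
  by move=> /eqP.
subst c.
have : b ^+ 7 = 0.
  rewrite -e3; have := c2F => c2.
  transitivity (b ^+ 7 + b ^+ 7 *+ 2); last by ring.
  by rewrite -mulr_natr c2 mulr0 addr0.
by move/eqP; rewrite expf_eq0 (negbTE b0) andbF.
Qed.


Lemma first_id (a b : F) : a != 0 -> b != 0 -> a != b ->
  exists x, pinv m x + pinv m (x + a) + pinv m (x + b) + pinv m (x + a + b) != 0.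
Proof.
move=> a0 b0 ab.
have c2 := c2F.
have [x hx] : exists x, x \notin [:: 0; a; b; a + b].
  apply/existsP; apply: contraT; rewrite negb_exists => /forallP hall.
  have : (size (enum F) <= size [:: 0; a; b; a + b]%R)%N.
    apply: uniq_leq_size; first exact: enum_uniq.
    by move=> y _; have := hall y; rewrite negbK.
  by rewrite -cardE hcard /=; have := m_ge8; lia.
move: hx; rewrite !inE !negb_or => /and4P [x0 xa xb xab].
have nz : forall u v : F, u != v -> u + v != 0.
  by move=> u v; apply: contra; rewrite addr_eq0 c2_opp // => /eqP ->.
have xa0 := nz _ _ xa; have xb0 := nz _ _ xb.
have xab0 : x + a + b != 0 by rewrite -addrA nz.
exists x; rewrite !pinv_inv //.
have D0 : x * (x + a) * (x + b) * (x + a + b) != 0 by rewrite !mulf_neq0.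
have ab0 : a + b != 0 by rewrite nz.
apply: contraTneq (mulf_neq0 (mulf_neq0 a0 b0) ab0) => hs.
apply/negPn/eqP.
have E : (x^-1 + (x + a)^-1 + (x + b)^-1 + (x + a + b)^-1) * (x * (x + a) * (x + b) * (x + a + b))
   = a * b * (a + b) + 2%:R * (2%:R * x^+3 + 3%:R * x^+2 * a + 3%:R * x^+2 * b + 3%:R * x * a * b
        + x * b^+2 + x * a^+2).
  by field; rewrite ?x0 ?xa0 ?xb0 ?xab0.
by move: E; rewrite hs mul0r c2 mul0r addr0.
Qed.

End FF.
Theorem lemma3p9 (F : finFieldType) (m : nat) (hm : (4 <= m)%N)
  (hcard : #|F| = (2 ^ m)%N) (a1 a2 b1 b2 : F) :
  (forall x : F,
     pinv m x + pinv m (x + a2) + pinv m (x + b2) + pinv m (x + a2 + b2) = 0 /\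
     trace1 m (a1 * pinv m (x + a2) + b1 * pinv m (x + b2)
               + (a1 + b1) * pinv m (x + a2 + b2)) = 0)
  <->
  ([/\ a1 = 0 & a2 = 0] \/ [/\ b1 = 0 & b2 = 0] \/
   [/\ a1 = b1 & a2 = b2] \/ [/\ a2 = 0 & b2 = 0]).
Proof.
have hm3 : (3 <= m)%N by apply: leq_trans hm.
have c2 := @c2F F m hcard.
have dbl : forall u : F, u + u = 0 := @c2_addrr F c2.
have tr0 : trace1 m (0 : F) = 0.
  by rewrite /trace1 big1 // => i _; rewrite expr0n expn_eq0.
split.
- move=> H.
  have H1 x := (H x).1; have H2 x := (H x).2.
  have [a20|a20] := eqVneq a2 0.
    have [b20|b20] := eqVneq b2 0; first by right; right; right.
    left; split => //; apply: (@keyL F m hm3 hcard _ _ b20) => x.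
    have := H2 x; subst a2; rewrite !addr0 => <-; congr trace1.
    transitivity (a1 * (pinv m x + pinv m (x + b2)) + (b1 + b1) * pinv m (x + b2)).
      by rewrite dbl mul0r addr0.
    ring.
  have [b20|b20] := eqVneq b2 0.
    right; left; split => //; apply: (@keyL F m hm3 hcard _ _ a20) => x.
    have := H2 x; subst b2; rewrite !addr0 => <-; congr trace1.
    transitivity (b1 * (pinv m x + pinv m (x + a2)) + (a1 + a1) * pinv m (x + a2)).
      by rewrite dbl mul0r addr0.
    ring.
  have [ab|ab] := eqVneq a2 b2.
    right; right; left; split => //; subst b2.
    have : a1 + b1 = 0.
      apply: (@keyL F m hm3 hcard _ _ a20) => x.
      have := H2 x; rewrite -[x + a2 + a2]addrA dbl addr0 => <-; congr trace1.
      ring.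
    by move/eqP; rewrite addr_eq0 (@c2_opp F c2) => /eqP.
  have [x hx] := @first_id F m hm3 hcard _ _ a20 b20 ab.
  by rewrite H1 eqxx in hx.
- case => [[-> ->]|[[-> ->]|[[-> ->]|[-> ->]]]] x; split.
  + by rewrite !addr0 dbl add0r dbl.
  + by rewrite !addr0 mul0r !add0r dbl tr0.
  + by rewrite !addr0 -addrA dbl.
  + by rewrite !addr0 mul0r addr0 dbl tr0.
  + by rewrite -[x + b2 + b2]addrA dbl addr0 -[_ + _ + pinv m (x + b2)]addrA dbl addr0 dbl.
  + by rewrite !dbl mul0r addr0 tr0.
  + by rewrite !addr0 dbl add0r dbl.
  + by rewrite !addr0 -!mulrDl dbl mul0r tr0.
Qed.
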